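(* Let $\mathbf X$ be a random variable with values in $\mathcal X$, let $\mathcal A$ be a finite set, and let $Q_0,Q_1:\mathcal X\times\mathcal A\to(0,\infty)$ be Q-functions with $\mathbb E\big[\sum_{a\in\mathcal A}Q_0(\mathbf X,a)\big]<\infty$. For $\gamma\notin\{0,-1\}$ define $$H_\gamma(Q_0,Q_1)=-\frac1\gamma\,\mathbb E\Bigg[\frac{\sum_{a\in\mathcal A}Q_0(\mathbf X,a)\,Q_1(\mathbf X,a)^{\gamma}}{\big\{\sum_{a\in\mathcal A}Q_1(\mathbf X,a)^{1+\gamma}\big\}^{\frac{\gamma}{1+\gamma}}}\Bigg],\qquad D_\gamma(Q_0,Q_1)=H_\gamma(Q_0,Q_1)-H_\gamma(Q_0,Q_0).$$ For $j=0,1$ let $\mathcal D_j(\mathbf x)=\operatorname{argmax}_{a\in\mathcal A}Q_j(\mathbf x,a)$ (the maximizer being assumed unique for each $\mathbf x$), and define the value function generated by $Q_0$ as $\mathbb V_0(\mathcal D)=\mathbb E[Q_0(\mathbf X,\mathcal D(\mathbf X))]$ for policy functions $\mathcal D:\mathcal X\to\mathcal A$. Then $$\lim_{\gamma\to\infty}\gamma\,D_\gamma(Q_0,Q_1)=\mathbb V_0(\mathcal D_0)-\mathbb V_0(\mathcal D_1).$$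
   Context: A Q-function is a measurable function $\mathcal X\times\mathcal A\to(0,\infty)$; a policy function is a measurable map $\mathcal X\to\mathcal A$. $\mathbb E$ denotes expectation with respect to $\mathbf X$. *)

(* Defs.v *)
From HB Require Import structures.
From mathcomp Require Import all_boot all_order all_algebra.
From mathcomp Require Import all_classical all_reals all_analysis.
Set Implicit Arguments. Unset Strict Implicit. Unset Printing Implicit Defensive.
Import Order.TTheory GRing.Theory Num.Theory.
Local Open Scope classical_set_scope.
Local Open Scope ring_scope.

(* Expectation w.r.t. X is written as an integral over the underlying
   probability space (T, P) of a function of X t. *)
Section Defs.
Context {d d' : measure_display} {R : realType} {T : measurableType d}
  {Xs : measurableType d'} {A : finType}.

Definition Hgamma (P : probability T R) (X : T -> Xs) (Q0 Q1 : Xs -> A -> R)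
  (g : R) : R :=
  - g^-1 * Rintegral P setT (fun t =>
      (\sum_a Q0 (X t) a * Q1 (X t) a `^ g)
      / (\sum_a Q1 (X t) a `^ (1 + g)) `^ (g / (1 + g))).

Definition Dgamma (P : probability T R) (X : T -> Xs) (Q0 Q1 : Xs -> A -> R)
  (g : R) : R :=
  Hgamma P X Q0 Q1 g - Hgamma P X Q0 Q0 g.

Definition value0 (P : probability T R) (X : T -> Xs) (Q0 : Xs -> A -> R)
  (D : Xs -> A) : R :=
  Rintegral P setT (fun t => Q0 (X t) (D (X t))).

End Defs.

(* Main.v *)
Require Import Defs.
From HB Require Import structures.
From mathcomp Require Import all_boot all_order all_algebra.
From mathcomp Require Import all_classical all_reals all_analysis.
From mathcomp Require Import measurable_realfun.
Import Order.TTheory GRing.Theory Num.Theory.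
Import numFieldNormedType.Exports.
Local Open Scope classical_set_scope.
Local Open Scope ring_scope.

Section key.
Context {R : realType} {A : finType}.

Definition Fk (c q : A -> R) (g : R) : R :=
  (\sum_a c a * q a `^ g) / (\sum_a q a `^ (1 + g)) `^ (g / (1 + g)).

Lemma powR_lt1_cvg0 (x : R) : 0 < x < 1 -> x `^ g @[g --> +oo] --> 0.
Proof.
move=> /andP[x0 x1].
have lnx : 0 < - ln x by rewrite oppr_gt0 ln_lt0 // x0 x1.
have -> : (fun g => x `^ g) = (fun g => expR (- (g * - ln x))).
  by apply/funext => g; rewrite /powR gt_eqF// mulrN opprK.
apply: (cvg_comp (fun g => g * - ln x) (fun y => expR (- y))); last exact: cvgr_expR.
apply/cvgryPge => B; near=> g; rewrite -(ler_pdivrMr _ _ lnx); near: g.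
by apply: nbhs_pinfty_ge; rewrite num_real.
Unshelve. all: by end_near. Qed.

Lemma Fk_scale (c q : A -> R) (k g : R) : 0 < k -> 0 < g -> (forall a, 0 < q a) ->
  Fk c (fun a => k * q a) g = Fk c q g.
Proof.
move=> k0 g0 q0; rewrite /Fk.
have e1 : \sum_a c a * (k * q a) `^ g = k `^ g * \sum_a c a * q a `^ g.
  rewrite mulr_sumr; apply: eq_bigr => a _.
  by rewrite powRM ?(ltW k0) ?(ltW (q0 a)) // mulrCA.
have e2 : \sum_a (k * q a) `^ (1 + g) = k `^ (1 + g) * \sum_a q a `^ (1 + g).
  rewrite mulr_sumr; apply: eq_bigr => a _.
  by rewrite powRM ?(ltW k0) ?(ltW (q0 a)).
have g1 : 1 + g != 0 by rewrite gt_eqF // addr_gt0.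
rewrite e1 e2. rewrite powRM ?powR_ge0 // ?sumr_ge0 // ?(ltW k0) ; last by move=> a _; exact: powR_ge0.
rewrite -powRrM mulrCA divff // mulr1.
have kg : k `^ g != 0 by rewrite gt_eqF // powR_gt0.
by rewrite invfM mulrACA divff // mul1r.
Qed.

Lemma sum_cvg (c r : A -> R) a0 : (forall a, 0 < r a) -> r a0 = 1 ->
  (forall b, b != a0 -> r b < 1) ->
  (\sum_a c a * r a `^ g) @[g --> +oo] --> c a0.
Proof.
move=> r0 ra0 rb.
have -> : c a0 = \sum_a (if a == a0 then c a else 0).
  by rewrite (bigD1 a0) //= eqxx big1 ?addr0 // => b /negbTE ->.
apply: cvg_big => //; first exact: add_continuous.
move=> a _; case: eqP => [->|/eqP ab].
  have -> : (fun g => c a0 * r a0 `^ g) = fun=> c a0.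
    by apply/funext => g; rewrite ra0 powR1 mulr1.
  exact: cvg_cst.
have := cvgM (cvg_cst (c a)) (powR_lt1_cvg0 (r a) _).
by rewrite mulr0; apply; rewrite r0 rb.
Qed.


Section norm.
Variables (c r : A -> R) (a0 : A).
Hypotheses (r0 : forall a, 0 < r a) (ra0 : r a0 = 1) (rb : forall b, b != a0 -> r b < 1).

Let r1 a : 0 < r a <= 1.
Proof. rewrite r0 /=; case: (eqVneq a a0) => [->|/rb/ltW //]; by rewrite ra0. Qed.

Let s (g : R) := \sum_a r a `^ (1 + g).

Let s_ge1 g : 1 <= s g.
Proof.
rewrite /s (bigD1 a0) //= ra0 powR1 lerDl; apply: sumr_ge0 => a _; exact: powR_ge0.
Qed.

Let den_bounds g : 0 < g -> 1 <= s g `^ (g / (1 + g)) <= \sum_a 1 * r a `^ g.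
Proof.
move=> g0; have g1 : 0 < 1 + g by rewrite addr_gt0.
apply/andP; split.
  have e1 : (1:R) = 1 `^ (g / (1 + g)) by rewrite powR1.
  rewrite [X in X <= _]e1.
  apply: ge0_ler_powR => //; first by rewrite divr_ge0 // ltW.
    by rewrite nnegrE.
  by rewrite nnegrE (le_trans _ (s_ge1 g)).
apply: (le_trans (ler1_powR _ _)); first exact: s_ge1.
  by rewrite ler_pdivrMr // mul1r lerDr.
apply: ler_sum => a _; rewrite mul1r; apply: ger_powR; first exact: r1.
by rewrite lerDr.
Qed.

Lemma Fk_norm_cvg : Fk c r g @[g --> +oo] --> c a0.
Proof.
have hN := sum_cvg c r a0 r0 ra0 rb.
have hD : s g `^ (g / (1 + g)) @[g --> +oo] --> (1:R).
  apply: (@squeeze_cvgr _ _ _ _ (fun=> 1) (fun g => \sum_a 1 * r a `^ g)).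
  - by near=> g; apply: den_bounds; near: g; apply: nbhs_pinfty_gt; rewrite num_real.
  - exact: cvg_cst.
  - exact: (sum_cvg (fun=> 1) r a0 r0 ra0 rb).
have h := cvgM hN (cvgV (oner_neq0 _) hD).
by rewrite invr1 mulr1 in h; exact: h.
Unshelve. all: by end_near. Qed.

Lemma Fk_norm_bound g : (forall a, 0 <= c a) -> 0 < g -> 0 <= Fk c r g <= \sum_a c a.
Proof.
move=> c0 g0; have [D1 _] := andP (den_bounds g g0).
have Dpos : 0 < s g `^ (g / (1 + g)) by apply: lt_le_trans D1.
have N0 : 0 <= \sum_a c a * r a `^ g.
  by apply: sumr_ge0 => a _; rewrite mulr_ge0 // powR_ge0.
rewrite /Fk divr_ge0 ?(ltW Dpos) //=.
have hNc : \sum_a c a * r a `^ g <= \sum_a c a.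
  apply: ler_sum => a _; apply: ler_piMr => //.
  rewrite -[X in _ <= X](powRr0 (r a)); apply: ger_powR; [exact: r1 | exact: ltW].
rewrite ler_pdivrMr //; apply: (le_trans hNc); apply: ler_peMr => //.
by apply: sumr_ge0.
Qed.
End norm.

Section gen.
Variables (c q : A -> R) (a0 : A).
Hypotheses (q0 : forall a, 0 < q a) (qb : forall b, b != a0 -> q b < q a0).
Let k := (q a0)^-1.
Let k0 : 0 < k. Proof. by rewrite invr_gt0. Qed.
Let r a := k * q a.
Let r0 a : 0 < r a. Proof. by rewrite mulr_gt0. Qed.
Let ra0 : r a0 = 1. Proof. by rewrite /r /k mulVf // gt_eqF. Qed.
Let rb b : b != a0 -> r b < 1.
Proof. by move=> /qb h; rewrite /r /k mulrC ltr_pdivrMr // mul1r. Qed.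

Lemma Fk_cvg : Fk c q g @[g --> +oo] --> c a0.
Proof.
apply: (cvg_trans _ (Fk_norm_cvg c r a0 r0 ra0 rb)).
apply: near_eq_cvg; near=> g; rewrite /r Fk_scale //.

Unshelve. all: by end_near. Qed.

Lemma Fk_bound g : (forall a, 0 <= c a) -> 0 < g -> 0 <= Fk c q g <= \sum_a c a.
Proof.
move=> c0 g0; rewrite -(Fk_scale c q k g k0 g0 q0); exact: (Fk_norm_bound c r a0 r0 ra0 rb).
Qed.
End gen.
End key.

Section main.
Context {d d' : measure_display} {R : realType} {T : measurableType d}
  {Xs : measurableType d'} {A : finType}.
Variables (P : probability T R) (X : T -> Xs) (Q0 Q : Xs -> A -> R) (D : Xs -> A).
Hypotheses (mX : measurable_fun setT X)
  (mQ0 : forall a, measurable_fun setT (fun x => Q0 x a))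
  (mQ : forall a, measurable_fun setT (fun x => Q x a))
  (Q0p : forall x a, 0 < Q0 x a) (Qp : forall x a, 0 < Q x a)
  (intQ : (\int[P]_t (\sum_a Q0 (X t) a)%:E < +oo)%E)
  (hD : forall x b, b != D x -> Q x b < Q x (D x)).

Let I (g : R) := Rintegral P setT (fun t => Fk (Q0 (X t)) (Q (X t)) g).

Let mF g : measurable_fun setT (fun t => Fk (Q0 (X t)) (Q (X t)) g).
Proof.
have -> : (fun t => Fk (Q0 (X t)) (Q (X t)) g) =
  (fun t => (\sum_a Q0 (X t) a * Q (X t) a `^ g) *
            (\sum_a Q (X t) a `^ (1 + g)) `^ (- (g / (1 + g)))).
  by apply/funext => t; rewrite /Fk powRN.
apply: measurable_funM.
  apply: measurable_sum => a; apply: measurable_funM.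
    exact: measurableT_comp (mQ0 a) mX.
  apply: measurableT_comp (measurable_powR _) _.
  exact: measurableT_comp (mQ a) mX.
apply: measurableT_comp (measurable_powR _) _.
apply: measurable_sum => a; apply: measurableT_comp (measurable_powR _) _.
exact: measurableT_comp (mQ a) mX.
Qed.

Let ig : P.-integrable setT (fun t => (\sum_a Q0 (X t) a)%:E).
Proof.
apply/integrableP; split.
  apply/measurable_EFinP; apply: measurable_sum => a.
  exact: measurableT_comp (mQ0 a) mX.
rewrite (eq_integral (fun t => (\sum_a Q0 (X t) a)%:E)) //.
move=> t _; rewrite gee0_abs // lee_fin; apply: sumr_ge0 => a _; exact: ltW.
Qed.

Let seq_cvg (v : R^nat) : (forall n, 0 < v n) -> v n @[n --> \oo] --> +oo ->
  I (v n) @[n --> \oo] --> Rintegral P setT (fun t => Q0 (X t) (D (X t))).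
Proof.
move=> v0 vy.
pose fn n t := (Fk (Q0 (X t)) (Q (X t)) (v n))%:E.
pose f t := (Q0 (X t) (D (X t)))%:E.
have mfn n : measurable_fun setT (fn n) by apply/measurable_EFinP; exact: mF.
have ffn x : setT x -> fn ^~ x @ \oo --> f x.
  move=> _; apply: cvg_EFin; first by near=> n.
  have h := (cvg_pinftyP _ _).1 (Fk_cvg (Q0 (X x)) (Q (X x)) (D (X x)) (Qp (X x)) (hD (X x))) v vy.
  exact: h.
have fing x : setT x -> ((\sum_a Q0 (X x) a)%:E \is a fin_num)%E by [].
have absfg n x : setT x -> (`|fn n x| <= (\sum_a Q0 (X x) a)%:E)%E.
  move=> _; rewrite /fn /= lee_fin.
  have [h1 h2] := andP (Fk_bound (Q0 (X x)) (Q (X x)) (D (X x)) (Qp (X x)) (hD (X x)) (v n) (fun a => ltW (Q0p (X x) a)) (v0 n)).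
  by rewrite ger0_norm.
have := dominated_cvg measurableT mfn ffn fing ig absfg.
have fint := lebesgue_integral_dominated_convergence.dominated_integrable measurableT fn f (fun t => (\sum_a Q0 (X t) a)%:E) mfn ffn ig absfg.
have ffin := integrable_fin_num measurableT fint.
rewrite -(fineK ffin) => /fine_cvg; exact.
Unshelve. all: by end_near. Qed.

Lemma int_cvg : I g @[g --> +oo] --> value0 P X Q0 D.
Proof.
apply/cvg_pinftyP => u uy.
pose v n := Num.max (u n) 1.
have v0 n : 0 < v n by rewrite /v lt_max ltr01 orbT.
have vy : v n @[n --> \oo] --> +oo.
  apply/cvgryPge => B; move/cvgryPge : uy => /(_ B).
  by apply: filterS => n h; rewrite /v le_max h.
apply: (cvg_trans _ (seq_cvg v v0 vy)).
apply: near_eq_cvg; move/cvgryPge : uy => /(_ 1); apply: filterS => n h.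
by rewrite /v max_l.
Qed.
End main.

Theorem theorem2 (d d' : measure_display) (R : realType) (T : measurableType d)
  (Xs : measurableType d') (A : finType) (P : probability T R) (X : T -> Xs)
  (Q0 Q1 : Xs -> A -> R) (D0 D1 : Xs -> A) :
  measurable_fun setT X ->
  (forall a, measurable_fun setT (fun x => Q0 x a)) ->
  (forall a, measurable_fun setT (fun x => Q1 x a)) ->
  (forall x a, 0 < Q0 x a) ->
  (forall x a, 0 < Q1 x a) ->
  (\int[P]_t (\sum_a Q0 (X t) a)%:E < +oo)%E ->
  (forall x b, b != D0 x -> Q0 x b < Q0 x (D0 x)) ->
  (forall x b, b != D1 x -> Q1 x b < Q1 x (D1 x)) ->
  (g * Dgamma P X Q0 Q1 g) @[g --> +oo] -->
    value0 P X Q0 D0 - value0 P X Q0 D1.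
Proof.
move=> mX mQ0 mQ1 Q0p Q1p intQ hD0 hD1.
have h0 := int_cvg P X Q0 Q0 D0 mX mQ0 mQ0 Q0p Q0p intQ hD0.
have h1 := int_cvg P X Q0 Q1 D1 mX mQ0 mQ1 Q0p Q1p intQ hD1.
have key (a b g : R) : g != 0 -> g * (- g^-1 * a - (- g^-1 * b)) = b - a.
  by move=> g0; rewrite !mulNr mulrBr !mulrN !mulrA divff // !mul1r opprK addrC.
apply: (cvg_trans _ (cvgB h0 h1)).
apply: near_eq_cvg; near=> g.
rewrite /Dgamma /Hgamma key //.
near: g; apply: filterS (nbhs_pinfty_gt (num_real 0)) => g /gt_eqF ->.
by [].
Unshelve. all: by end_near. Qed.
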